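(* Let $\mathcal{A}$ be a finite poset, $V$ a vector space and $(\pi_a)_{a\in\mathcal{A}}$ a family of projectors of $V$ satisfying the intersection property, and set $S_a=\operatorname{im}s_a$. Then for every $a\in\mathcal{A}$ the summation map $\bigoplus_{b\le a}S_b\to\operatorname{im}\pi_a$, $(w_b)\mapsto\sum_{b\le a}w_b$, is a well-defined isomorphism, and the summation map $\bigoplus_{b\in\mathcal{A}}S_b\to V$ is injective.
   Context: $(s_a)_{a\in\mathcal{A}}$ is the unique family of endomorphisms of $V$ with $\pi_a=\sum_{b\le a}s_b$ for every $a$. Intersection property: for all $a,b\in\mathcal{A}$, $\pi_a\pi_b=\sum_{c\le a,\ c\le b}s_c$. *)

(* Defs.v *)
From HB Require Import structures.
From mathcomp Require Import all_boot all_order all_algebra.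
Set Implicit Arguments. Unset Strict Implicit. Unset Printing Implicit Defensive.
Import Order.TTheory GRing.Theory.

Definition in_image (T U : Type) (f : T -> U) (v : U) : Prop := exists u, f u = v.

(* Main.v *)
Require Import Defs.
From HB Require Import structures.
From mathcomp Require Import all_boot all_order all_algebra.
Import Order.TTheory GRing.Theory.
Local Open Scope ring_scope.

Lemma poset_ind (disp : Order.disp_t) (A : finPOrderType disp) (P : A -> Prop) :
  (forall b, (forall c, (c < b)%O -> P c) -> P b) -> forall b, P b.
Proof.
move=> IH.
suff H : forall n b, (#|[pred c | (c < b)%O]| <= n)%N -> P b.
  by move=> b; apply: (H _ b (leqnn _)).
elim=> [|n IHn] b Hb; apply: IH => c Hcb.
  move: Hb; rewrite leqn0 => /eqP/card0_eq/(_ c).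
  by rewrite !inE Hcb.
apply: IHn; rewrite -ltnS; apply: leq_trans Hb; apply: proper_card.
apply/properP; split.
  by apply/subsetP => x; rewrite !inE => Hx; apply: lt_trans Hcb.
by exists c; rewrite !inE ?ltxx.
Qed.

Section S.
Variables (K : fieldType) (V : lmodType K) (disp : Order.disp_t) (A : finPOrderType disp)
  (pi s : A -> {linear V -> V}).
Hypothesis Hs : forall a v, pi a v = \sum_(b | (b <= a)%O) s b v.
Hypothesis Hint : forall a b v,
      pi a (pi b v) = \sum_(c | (c <= a)%O && (c <= b)%O) s c v.

Lemma sE b v : s b v = pi b v - \sum_(c | (c < b)%O) s c v.
Proof.
rewrite Hs (bigD1 b) //=.
rewrite (eq_bigl (fun c => (c < b)%O)) ?addrK // => c.
by rewrite lt_neqAle andbC.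
Qed.

Lemma piS a b v : pi a (s b v) = if (b <= a)%O then s b v else 0.
Proof.
move: v; elim/poset_ind: b => b IH v.
rewrite [in LHS]sE linearB linear_sum /= Hint.
rewrite [X in _ - X](eq_bigr (fun c => if (c <= a)%O then s c v else 0)); last by move=> c cb; rewrite (IH c cb).
rewrite -big_mkcondr.
case: ifP => ba.
  rewrite (bigD1 b) /= ?ba ?lexx //.
  rewrite [X in _ + X - _](eq_bigl (fun c => (c < b)%O && (c <= a)%O)) ?addrK // => c.
  by rewrite lt_neqAle; case: (c <= a)%O; case: (c <= b)%O; case: (b == c); case: (c == b).
rewrite [X in X - _](eq_bigl (fun c => (c < b)%O && (c <= a)%O)) ?subrr // => c.
rewrite [(c <= b)%O]le_eqVlt; case: eqP => [->|] /=; rewrite ?ltxx ?ba ?andbF //.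
by rewrite andbC.
Qed.

Lemma ssS a b v : s a (s b v) = if a == b then s b v else 0.
Proof.
move: v; elim/poset_ind: a => a IH v.
rewrite [in LHS]sE piS.
rewrite (eq_bigr (fun c => if c == b then s b v else 0)); last by move=> c cb; rewrite IH.
rewrite -big_mkcondr.
rewrite le_eqVlt; case: eqP => [->|nab] /=.
  rewrite big_pred0 ?subr0 ?eqxx // => c; case: eqP => [->|]; rewrite ?ltxx ?andbF //.
have -> : (a == b) = false by apply/eqP => e; apply: nab; rewrite e.
case: ifP => ba.
  rewrite (big_pred1 b) ?subrr // => c; rewrite /=; case: (c =P b) => [->|]; rewrite ?ba ?andbF //.
rewrite big_pred0 ?subrr // => c; case: (c =P b) => [->|]; rewrite ?ba ?andbF //.
Qed.
End S.

From Stdlib Require Import FunctionalExtensionality.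

Theorem mainTheorem8 (K : fieldType) (V : lmodType K)
  (disp : Order.disp_t) (A : finPOrderType disp)
  (pi s : A -> {linear V -> V})
  (* each pi a is a projector *)
  (Hproj : forall a v, pi a (pi a v) = pi a v)
  (* s is the (unique) family with pi_a = sum_{b <= a} s_b *)
  (Hs : forall a v, pi a v = \sum_(b | (b <= a)%O) s b v)
  (* intersection property *)
  (Hint : forall a b v,
      pi a (pi b v) = \sum_(c | (c <= a)%O && (c <= b)%O) s c v) :
  (forall a : A,
     (* well-defined: the summation lands in im pi_a *)
     (forall w : A -> V, (forall b, (b <= a)%O -> in_image (s b) (w b)) ->
        in_image (pi a) (\sum_(b | (b <= a)%O) w b))
     (* injective *)
  /\ (forall w w' : A -> V,
        (forall b, (b <= a)%O -> in_image (s b) (w b)) ->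
        (forall b, (b <= a)%O -> in_image (s b) (w' b)) ->
        \sum_(b | (b <= a)%O) w b = \sum_(b | (b <= a)%O) w' b ->
        forall b, (b <= a)%O -> w b = w' b)
     (* surjective onto im pi_a *)
  /\ (forall v, in_image (pi a) v ->
        exists w : A -> V, (forall b, (b <= a)%O -> in_image (s b) (w b)) /\
          \sum_(b | (b <= a)%O) w b = v))
  /\
  (* the total summation map is injective *)
  (forall w w' : A -> V,
     (forall b, in_image (s b) (w b)) -> (forall b, in_image (s b) (w' b)) ->
     \sum_b w b = \sum_b w' b -> w = w').
Proof.
have P1 := @piS K V disp A pi s Hs Hint; have P2 := @ssS K V disp A pi s Hs Hint.
have key : forall (Q : pred A) (w : A -> V), (forall b, Q b -> in_image (s b) (w b)) ->
    forall c, s c (\sum_(b | Q b) w b) = if Q c then w c else 0.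
  move=> Q w Hw c; rewrite linear_sum /=.
  rewrite (eq_bigr (fun b => if b == c then w b else 0)); last first.
    move=> b /Hw [u <-]; rewrite P2; case: (c =P b) => [->|]; rewrite ?eqxx //.
    by case: (b =P c) => // -> .
  rewrite -big_mkcondr; case: ifP => Qc.
    rewrite (big_pred1 c) // => b /=; case: (b =P c) => [->|]; rewrite ?Qc ?andbF //.
  rewrite big_pred0 // => b /=; case: (b =P c) => [->|]; rewrite ?Qc ?andbF //.
split.
  move=> a; split; last split.
  - move=> w Hw; exists (\sum_(b | (b <= a)%O) w b).
    rewrite linear_sum /=; apply: eq_bigr => b ba; have [u <-] := Hw b ba; by rewrite P1 ba.
  - move=> w w' Hw Hw' E b ba.
    have := key _ _ Hw b; have := key _ _ Hw' b; rewrite E ba => -> <-. by [].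
  - move=> v [u <-]; exists (fun b => s b u); split; last by rewrite Hs.
    by move=> b _; exists u.
move=> w w' Hw Hw' E; apply: functional_extensionality => b.
have := key predT w (fun b _ => Hw b) b; have := key predT w' (fun b _ => Hw' b) b.
by rewrite /= E => -> <-.
Qed.
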